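(* Let $\mathcal C$ be a $C^2$ convex curve with total curvature satisfying $\int_{\mathcal C}\kappa\,ds\le\pi$ that intersects a circle of radius $R$ in three or more points. Then there is a point on $\mathcal C$ with curvature $\kappa=1/R$.
   Context: Curves are of class $C^2$ with nonvanishing first and second derivative vectors, oriented so that the curvature $\kappa$ is positive (convex curves). $s$ denotes arclength and $\int_{\mathcal C}\kappa\,ds$ is the total curvature, i.e. the total change of the angle of the tangent vector along $\mathcal C$. *)

(* Defs.v *)
From Stdlib Require Import Reals.
From Coquelicot Require Import Coquelicot.
Open Scope R_scope.

(* A plane curve t |-> (x t, y t).  It is C^2: twice differentiable
   with continuous second derivative (we take x, y defined on all of R;
   only the restriction to [a,b] matters). *)
Definition C2 (f : R -> R) : Prop :=
  forall t, ex_derive f t /\ ex_derive (Derive f) t /\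
            continuous (Derive (Derive f)) t.

Definition curvature (x y : R -> R) (t : R) : R :=
  (Derive x t * Derive (Derive y) t - Derive y t * Derive (Derive x) t)
  / Rpower (Derive x t ^ 2 + Derive y t ^ 2) (3/2).

Definition speed (x y : R -> R) (t : R) : R :=
  sqrt (Derive x t ^ 2 + Derive y t ^ 2).

Definition total_curvature (x y : R -> R) (a b : R) : R :=
  RInt (fun t => curvature x y t * speed x y t) a b.

Definition on_circle (x y : R -> R) (cx cy r t : R) : Prop :=
  (x t - cx) ^ 2 + (y t - cy) ^ 2 = r ^ 2.

Definition same_point (x y : R -> R) (s t : R) : Prop :=
  x s = x t /\ y s = y t.

(* Main.v *)
Require Import Defs.
From Stdlib Require Import Reals Lra Psatz Classical.
From Coquelicot Require Import Coquelicot.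
Open Scope R_scope.

Lemma cos_cmp sa ca sb cb :
  0 < sa -> 0 < sb -> sa*sa+ca*ca = 1 -> sb*sb+cb*cb = 1 ->
  0 < sb*ca - cb*sa -> cb < ca.
Proof.
  intros H1 H2 H3 H4 H5.
  destruct (Rlt_or_le cb ca) as [h|h]; [exact h|exfalso].
  destruct (Rle_or_lt 0 ca) as [h0|h0].
  - assert (sb*sb <= sa*sa) by nra.
    assert (sb <= sa) by nra. nra.
  - destruct (Rle_or_lt 0 cb) as [h1|h1].
    + nra.
    + assert (sa*sa <= sb*sb) by nra.
      assert (sa <= sb) by nra. nra.
Qed.

Lemma cos_cmp_le sa ca sb cb :
  0 < sa -> 0 < sb -> sa*sa+ca*ca = 1 -> sb*sb+cb*cb = 1 ->
  0 <= sb*ca - cb*sa -> cb <= ca.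
Proof.
  intros H1 H2 H3 H4 H5.
  destruct (Rle_or_lt cb ca) as [h|h]; [exact h|exfalso].
  destruct (Rle_or_lt 0 ca) as [h0|h0].
  - assert (sb*sb < sa*sa) by nra.
    assert (sb < sa) by nra. nra.
  - destruct (Rle_or_lt 0 cb) as [h1|h1].
    + nra.
    + assert (sa*sa < sb*sb) by nra.
      assert (sa < sb) by nra. nra.
Qed.

Lemma frame_pq pi qi pj qj s co :
  s*s+co*co = 1 -> 0 <= s -> 0 <= pi -> 0 <= pj ->
  pi*pi+qi*qi = 1 -> pj*pj+qj*qj = 1 ->
  pj*pj < pi*(pi*co - qi*s) -> pi*pi < pj*(pj*co+qj*s) -> 0 < qj.
Proof.
  intros Hs Hs0 Hpi Hpj Hi Hj H1 H2.
  set (A := pi*co - qi*s). set (C := qi*co + pi*s).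
  assert (HAC : A*A + C*C = 1) by (unfold A, C; nra).
  assert (Hpi0 : 0 < pi).
  { destruct Hpi as [h|h]; [exact h|]. subst pi. nra. }
  assert (HA : 0 < A).
  { destruct (Rle_or_lt A 0) as [h|h]; [|exact h]. fold A in H1. assert (pi*A <= 0) by (rewrite <- (Rmult_0_r pi); apply Rmult_le_compat_l; lra). nra. }
  assert (Hpj0 : 0 < pj).
  { destruct Hpj as [h|h]; [exact h|]. rewrite <- h in H2. nra. }
  set (B := pj*co + qj*s).
  assert (HB : 0 < B).
  { destruct (Rle_or_lt B 0) as [h|h]; [|exact h]. fold B in H2. nra. }
  assert (Hprod : pi*pj < A*B).
  { fold B in H2. fold A in H1.
    assert (h1 : pi*pi*(pj*pj) < pj*B*(pj*pj)) by (apply Rmult_lt_compat_r; nra).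
    assert (h2 : pj*B*(pj*pj) < pj*B*(pi*A)) by (apply Rmult_lt_compat_l; nra).
    assert (h3 : (pi*pj)*(pi*pj) < (pi*pj)*(A*B)) by nra.
    assert (h4 : 0 < pi*pj) by nra.
    destruct (Rlt_or_le (pi*pj) (A*B)) as [h|h]; [exact h|].
    assert ((pi*pj)*(A*B) <= (pi*pj)*(pi*pj)) by (apply Rmult_le_compat_l; lra).
    lra. }
  assert (Hid : A*B - pi*pj = s*(A*qj - C*pj)).
  { assert (e : A*B - pi*pj - s*(A*qj - C*pj) = pi*pj*(s*s+co*co - 1)) by (unfold A,B,C; ring).
    rewrite Hs in e. lra. }
  assert (Hsin : 0 < A*qj - C*pj) by nra.
  destruct (Rle_or_lt qj 0) as [Hq|Hq]; [|exact Hq].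
  exfalso.
  assert (H3 : C < qj) by (apply (cos_cmp pj qj A C); nra).
  assert (H4 : qi <= C) by (apply (cos_cmp_le A C pi qi); try nra; unfold A, C; nra).
  assert (pi*pi < pj*pj) by nra.
  assert (A*A < pj*pj) by nra.
  assert (pi < pj) by nra.
  assert (A < pj) by nra.
  assert (pi*A < pj*A) by (apply Rmult_lt_compat_r; lra).
  assert (pj*A < pj*pj) by (apply Rmult_lt_compat_l; lra).
  fold A in H1. lra.
Qed.

Lemma exists_pq r b c : 0 < r -> b*b + c*c = 2*r*c ->
  exists p q, 0 <= p /\ p*p+q*q = 1 /\ b = 2*r*p*q /\ c = 2*r*p*p.
Proof.
  intros Hr H.
  assert (Hc : 0 <= c) by nra.
  destruct Hc as [Hc|Hc].
  - set (p := sqrt (c/(2*r))).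
    assert (Hp2 : p*p = c/(2*r)) by (unfold p; apply sqrt_sqrt; apply Rlt_le, Rdiv_lt_0_compat; lra).
    assert (Hp : 0 < p) by (unfold p; apply sqrt_lt_R0; apply Rdiv_lt_0_compat; lra).
    exists p, (b/(2*r*p)). split; [lra|]. split; [|split].
    + assert (e : c = 2*r*(p*p)) by (rewrite Hp2; field; lra).
      assert (e2 : (b/(2*r*p))*(b/(2*r*p)) = b*b/(4*r*r*(p*p))) by (field; lra).
      rewrite e2. rewrite e in H.
      apply (Rmult_eq_reg_r (4*r*r*(p*p))); [|nra].
      field_simplify; [|nra]. nra.
    + field; lra.
    + rewrite Rmult_assoc, Hp2. field; lra.
  - subst c. assert (b = 0) by nra. subst b. exists 0, 1. repeat split; lra.
Qed.

Lemma frame_bc r bi ci bj cj s co :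
  0 < r -> s*s+co*co = 1 -> 0 <= s ->
  bi*bi+ci*ci = 2*r*ci -> bj*bj+cj*cj = 2*r*cj ->
  cj - co*ci + s*bi < 0 -> ci - co*cj - s*bj < 0 -> 0 < bj.
Proof.
  intros Hr Hs Hs0 Hi Hj H1 H2.
  destruct (exists_pq r bi ci Hr Hi) as [pi [qi [Hpi [Hi' [-> ->]]]]].
  destruct (exists_pq r bj cj Hr Hj) as [pj [qj [Hpj [Hj' [-> ->]]]]].
  assert (G1 : pj*pj < pi*(pi*co - qi*s)).
  { apply (Rmult_lt_reg_l (2*r)); [lra|]. nra. }
  assert (G2 : pi*pi < pj*(pj*co + qj*s)).
  { apply (Rmult_lt_reg_l (2*r)); [lra|]. nra. }
  assert (Hq := frame_pq pi qi pj qj s co Hs Hs0 Hpi Hpj Hi' Hj' G1 G2).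
  assert (Hpj0 : 0 < pj).
  { destruct Hpj as [h|h]; [exact h|]. rewrite <- h in G2. nra. }
  assert (0 < pj*qj) by (apply Rmult_lt_0_compat; lra).
  nra.
Qed.
Lemma opp_or_eq x1 y1 x2 y2 :
  x1*x1+y1*y1 = x2*x2+y2*y2 -> x1*y2 - y1*x2 = 0 ->
  (x1 = x2 /\ y1 = y2) \/ (x1 = -x2 /\ y1 = -y2).
Proof.
  intros H1 H2.
  set (u1 := x2 - x1). set (u2 := y2 - y1). set (w1 := x2 + x1). set (w2 := y2 + y1).
  assert (d : u1*w1 + u2*w2 = 0) by (unfold u1,u2,w1,w2; nra).
  assert (c : u1*w2 - u2*w1 = 0) by (unfold u1,u2,w1,w2; nra).
  assert (L : (u1*u1+u2*u2)*(w1*w1+w2*w2) = (u1*w1+u2*w2)^2 + (u1*w2-u2*w1)^2) by ring.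
  rewrite d, c in L.
  assert (Z : (u1*u1+u2*u2)*(w1*w1+w2*w2) = 0) by lra.
  apply Rmult_integral in Z. destruct Z as [Z|Z].
  - left. assert (u1 = 0 /\ u2 = 0) by (split; nra). unfold u1,u2 in *; lra.
  - right. assert (w1 = 0 /\ w2 = 0) by (split; nra). unfold w1,w2 in *; lra.
Qed.

Lemma mpn a b : 0 < a -> b < 0 -> a*b < 0. Proof. intros. nra. Qed.
Lemma mpp a b : 0 < a -> 0 < b -> 0 < a*b. Proof. intros. nra. Qed.
Lemma mnp a b : a <= 0 -> 0 < b -> a*b <= 0. Proof. intros. nra. Qed.
Lemma mpn' a b : 0 <= a -> 0 < b -> 0 <= a*b. Proof. intros. nra. Qed.
Lemma mpn'' a b : a < 0 -> 0 < b -> a*b < 0. Proof. intros. nra. Qed.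
Definition dot x1 y1 x2 y2 := x1*x2 + y1*y2.

Lemma three_caps r x1 y1 x2 y2 x3 y3 u1 w1 u2 w2 u3 w3 :
  0 < r ->
  x1*x1+y1*y1 = r*r -> x2*x2+y2*y2 = r*r -> x3*x3+y3*y3 = r*r ->
  (u1-x1)*(u1-x1)+(w1-y1)*(w1-y1) = r*r ->
  (u2-x2)*(u2-x2)+(w2-y2)*(w2-y2) = r*r ->
  (u3-x3)*(u3-x3)+(w3-y3)*(w3-y3) = r*r ->
  0 < (x2-x1)*u1 + (y2-y1)*w1 -> 0 < (x3-x1)*u1 + (y3-y1)*w1 ->
  0 < (x1-x2)*u2 + (y1-y2)*w2 -> 0 < (x3-x2)*u2 + (y3-y2)*w2 ->
  0 < (x1-x3)*u3 + (y1-y3)*w3 -> 0 < (x2-x3)*u3 + (y2-y3)*w3 ->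
  False.
Proof.
  intros Hr E1 E2 E3 F1 F2 F3 H21 H31 H12 H32 H13 H23.
  set (m1 := x1*u1+y1*w1). set (m2 := x2*u2+y2*w2). set (m3 := x3*u3+y3*w3).
  assert (Hm1 : 2*m1 = u1*u1+w1*w1) by (unfold m1; nra).
  assert (Hm2 : 2*m2 = u2*u2+w2*w2) by (unfold m2; nra).
  assert (Hm3 : 2*m3 = u3*u3+w3*w3) by (unfold m3; nra).
  assert (m1p : 0 < m1).
  { destruct (Rle_or_lt m1 0) as [h|h]; [|exact h].
    assert (u1 = 0 /\ w1 = 0) by (split; nra). destruct H as [-> ->]. lra. }
  assert (m2p : 0 < m2).
  { destruct (Rle_or_lt m2 0) as [h|h]; [|exact h].
    assert (u2 = 0 /\ w2 = 0) by (split; nra). destruct H as [-> ->]. lra. }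
  assert (m3p : 0 < m3).
  { destruct (Rle_or_lt m3 0) as [h|h]; [|exact h].
    assert (u3 = 0 /\ w3 = 0) by (split; nra). destruct H as [-> ->]. lra. }
  set (c12 := x1*y2 - y1*x2). set (c23 := x2*y3 - y2*x3). set (c31 := x3*y1 - y3*x1).
  set (Sg := c12 + c23 + c31).
  set (d21 := (x2-x1)*u1 + (y2-y1)*w1). set (d31 := (x3-x1)*u1 + (y3-y1)*w1).
  set (d12 := (x1-x2)*u2 + (y1-y2)*w2). set (d32 := (x3-x2)*u2 + (y3-y2)*w2).
  set (d13 := (x1-x3)*u3 + (y1-y3)*w3). set (d23 := (x2-x3)*u3 + (y2-y3)*w3).
  assert (I1 : m1*Sg = -(c31*d21 + c12*d31)) by (unfold m1,Sg,c12,c23,c31,d21,d31; ring).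
  assert (I2 : m2*Sg = -(c23*d12 + c12*d32)) by (unfold m2,Sg,c12,c23,c31,d12,d32; ring).
  assert (I3 : m3*Sg = -(c23*d13 + c31*d23)) by (unfold m3,Sg,c12,c23,c31,d13,d23; ring).
  assert (V2 : 2*Sg*(r*r) = c23*((x1-x2)^2+(y1-y2)^2) + c12*((x3-x2)^2+(y3-y2)^2)).
  { assert (e : 2*Sg*(x2*x2+y2*y2) = c23*((x1-x2)^2+(y1-y2)^2 + (x2*x2+y2*y2) - (x1*x1+y1*y1))
         + c12*((x3-x2)^2+(y3-y2)^2 + (x2*x2+y2*y2) - (x3*x3+y3*y3))) by (unfold Sg,c12,c23,c31; ring).
    rewrite E1, E2, E3 in e. lra. }
  assert (V1 : 2*Sg*(r*r) = c31*((x2-x1)^2+(y2-y1)^2) + c12*((x3-x1)^2+(y3-y1)^2)).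
  { assert (e : 2*Sg*(x1*x1+y1*y1) = c31*((x2-x1)^2+(y2-y1)^2 + (x1*x1+y1*y1) - (x2*x2+y2*y2))
         + c12*((x3-x1)^2+(y3-y1)^2 + (x1*x1+y1*y1) - (x3*x3+y3*y3))) by (unfold Sg,c12,c23,c31; ring).
    rewrite E1, E2, E3 in e. lra. }
  assert (V3 : 2*Sg*(r*r) = c23*((x1-x3)^2+(y1-y3)^2) + c31*((x2-x3)^2+(y2-y3)^2)).
  { assert (e : 2*Sg*(x3*x3+y3*y3) = c23*((x1-x3)^2+(y1-y3)^2 + (x3*x3+y3*y3) - (x1*x1+y1*y1))
         + c31*((x2-x3)^2+(y2-y3)^2 + (x3*x3+y3*y3) - (x2*x2+y2*y2))) by (unfold Sg,c12,c23,c31; ring).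
    rewrite E1, E2, E3 in e. lra. }
  assert (q12 : 0 <= (x1-x2)^2+(y1-y2)^2) by (pose proof (pow2_ge_0 (x1-x2)); pose proof (pow2_ge_0 (y1-y2)); lra).
  assert (q13 : 0 <= (x1-x3)^2+(y1-y3)^2) by (pose proof (pow2_ge_0 (x1-x3)); pose proof (pow2_ge_0 (y1-y3)); lra).
  assert (q23 : 0 <= (x2-x3)^2+(y2-y3)^2) by (pose proof (pow2_ge_0 (x2-x3)); pose proof (pow2_ge_0 (y2-y3)); lra).
  assert (q21 : (x2-x1)^2+(y2-y1)^2 = (x1-x2)^2+(y1-y2)^2) by ring.
  assert (q31 : (x3-x1)^2+(y3-y1)^2 = (x1-x3)^2+(y1-y3)^2) by ring.
  assert (q32 : (x3-x2)^2+(y3-y2)^2 = (x2-x3)^2+(y2-y3)^2) by ring.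
  assert (P1v : forall c q, 0 < c -> 0 <= q -> 0 <= c*q) by (intros; apply Rmult_le_pos; lra).
  assert (N1v : forall c q, c < 0 -> 0 <= q -> c*q <= 0) by (intros; nra).
  destruct (Rtotal_order Sg 0) as [HS|[HS|HS]].
  -
    pose proof (mpn _ _ m1p HS). pose proof (mpn _ _ m2p HS). pose proof (mpn _ _ m3p HS).
    assert (A1 : 0 < c31 \/ 0 < c12).
    { destruct (Rle_or_lt c31 0); destruct (Rle_or_lt c12 0); try tauto. exfalso.
      pose proof (mnp c31 d21 ltac:(assumption) H21). pose proof (mnp c12 d31 ltac:(assumption) H31). lra. }
    assert (A2 : 0 < c23 \/ 0 < c12).
    { destruct (Rle_or_lt c23 0); destruct (Rle_or_lt c12 0); try tauto. exfalso.
      pose proof (mnp c23 d12 ltac:(assumption) H12). pose proof (mnp c12 d32 ltac:(assumption) H32). lra. }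
    assert (A3 : 0 < c23 \/ 0 < c31).
    { destruct (Rle_or_lt c23 0); destruct (Rle_or_lt c31 0); try tauto. exfalso.
      pose proof (mnp c23 d13 ltac:(assumption) H13). pose proof (mnp c31 d23 ltac:(assumption) H23). lra. }
    assert (Sr : Sg*(r*r) < 0) by (apply mpn'' ; nra).
    assert (W : (0<c31/\0<c12) \/ (0<c23/\0<c12) \/ (0<c23/\0<c31)) by (destruct A1, A2, A3; tauto).
    destruct W as [[h1 h2]|[[h1 h2]|[h1 h2]]].
    + pose proof (P1v c31 ((x2-x1)^2+(y2-y1)^2) h1 ltac:(lra)); pose proof (P1v c12 ((x3-x1)^2+(y3-y1)^2) h2 ltac:(lra)); lra.
    + pose proof (P1v c23 _ h1 q12); pose proof (P1v c12 ((x3-x2)^2+(y3-y2)^2) h2 ltac:(lra)); lra.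
    + pose proof (P1v c23 _ h1 q13); pose proof (P1v c31 _ h2 q23); lra.
  -
    rewrite HS, Rmult_0_r in I1, I2, I3.
    assert (Hsg : forall a b d1 d2, 0 < d1 -> 0 < d2 -> 0 = -(a*d1 + b*d2) ->
       (b < 0 -> 0 < a) /\ (0 < b -> a < 0) /\ (b = 0 -> a = 0)).
    { intros a0 b0 e1 e2 h1 h2 h3. split; [|split]; intro hb.
      - destruct (Rle_or_lt a0 0) as [h|h]; [|exact h]. exfalso. nra.
      - destruct (Rle_or_lt 0 a0) as [h|h]; [|exact h]. exfalso. nra.
      - subst b0. destruct (Rtotal_order a0 0) as [h|[h|h]]; [exfalso; nra|exact h|exfalso; nra]. }
    destruct (Hsg _ _ _ _ H21 H31 I1) as [S1a [S1b S1c]].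
    destruct (Hsg _ _ _ _ H12 H32 I2) as [S2a [S2b S2c]].
    destruct (Hsg _ _ _ _ H13 H23 I3) as [S3a [S3b S3c]].
    assert (Hc12 : c12 = 0).
    { destruct (Rtotal_order c12 0) as [h|[h|h]]; [exfalso| exact h| exfalso].
      - pose proof (S1a h). pose proof (S2a h). pose proof (S3b H). lra.
      - pose proof (S1b h). pose proof (S2b h). pose proof (S3a H). lra. }
    pose proof (S1c Hc12) as Hc31. pose proof (S2c Hc12) as Hc23.
    destruct (opp_or_eq x1 y1 x2 y2) as [[? ?]|[? ?]]; [lra|exact Hc12| |].
    + subst. unfold d21 in H21. lra.
    + destruct (opp_or_eq x1 y1 x3 y3) as [[? ?]|[? ?]]; [lra| |subst; unfold d31 in H31; lra|].
      * unfold c31 in Hc31. lra.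
      * subst. unfold d23 in H23. assert (x2 = x3) by lra. assert (y2 = y3) by lra. subst. lra.
  - pose proof (mpp _ _ m1p HS). pose proof (mpp _ _ m2p HS). pose proof (mpp _ _ m3p HS).
    assert (A1 : c31 < 0 \/ c12 < 0).
    { destruct (Rle_or_lt 0 c31); destruct (Rle_or_lt 0 c12); try tauto. exfalso.
      pose proof (mpn' c31 d21 ltac:(assumption) H21). pose proof (mpn' c12 d31 ltac:(assumption) H31). lra. }
    assert (A2 : c23 < 0 \/ c12 < 0).
    { destruct (Rle_or_lt 0 c23); destruct (Rle_or_lt 0 c12); try tauto. exfalso.
      pose proof (mpn' c23 d12 ltac:(assumption) H12). pose proof (mpn' c12 d32 ltac:(assumption) H32). lra. }
    assert (A3 : c23 < 0 \/ c31 < 0).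
    { destruct (Rle_or_lt 0 c23); destruct (Rle_or_lt 0 c31); try tauto. exfalso.
      pose proof (mpn' c23 d13 ltac:(assumption) H13). pose proof (mpn' c31 d23 ltac:(assumption) H23). lra. }
    assert (Sr : 0 < Sg*(r*r)) by (apply mpp; nra).
    assert (W : (c31<0/\c12<0) \/ (c23<0/\c12<0) \/ (c23<0/\c31<0)) by (destruct A1, A2, A3; tauto).
    destruct W as [[h1 h2]|[[h1 h2]|[h1 h2]]].
    + pose proof (N1v c31 ((x2-x1)^2+(y2-y1)^2) h1 ltac:(lra)); pose proof (N1v c12 ((x3-x1)^2+(y3-y1)^2) h2 ltac:(lra)); lra.
    + pose proof (N1v c23 _ h1 q12); pose proof (N1v c12 ((x3-x2)^2+(y3-y2)^2) h2 ltac:(lra)); lra.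
    + pose proof (N1v c23 _ h1 q13); pose proof (N1v c31 _ h2 q23); lra.
Qed.
Lemma D_eq (f : R -> R) x a b : is_derive f x a -> a = b -> is_derive f x b.
Proof. intros H ->; exact H. Qed.
Lemma D_plus (f g : R -> R) x a b : is_derive f x a -> is_derive g x b -> is_derive (fun t => f t + g t) x (a + b).
Proof. intros. apply (is_derive_plus f g x a b); auto. Qed.
Lemma D_minus (f g : R -> R) x a b : is_derive f x a -> is_derive g x b -> is_derive (fun t => f t - g t) x (a - b).
Proof. intros. apply (is_derive_minus f g x a b); auto. Qed.
Lemma D_mult (f g : R -> R) x a b : is_derive f x a -> is_derive g x b -> is_derive (fun t => f t * g t) x (a * g x + f x * b).
Proof. intros. apply (is_derive_mult f g x a b); auto. intros; apply Rmult_comm. Qed.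
Lemma D_const (c x : R) : is_derive (fun _ => c) x 0.
Proof. apply (is_derive_const c x). Qed.
Lemma D_id (x : R) : is_derive (fun t => t) x 1.
Proof. apply (is_derive_id x). Qed.
Lemma D_cos (f : R -> R) x a : is_derive f x a -> is_derive (fun t => cos (f t)) x (- sin (f x) * a).
Proof. intros H. eapply D_eq. apply (is_derive_comp cos f x _ _ (is_derive_cos (f x)) H).
  simpl. unfold scal; simpl. unfold mult; simpl. ring. Qed.
Lemma D_sin (f : R -> R) x a : is_derive f x a -> is_derive (fun t => sin (f t)) x (cos (f x) * a).
Proof. intros H. eapply D_eq. apply (is_derive_comp sin f x _ _ (is_derive_sin (f x)) H).
  simpl. unfold scal; simpl. unfold mult; simpl. ring. Qed.
Lemma D_opp_arg (f : R -> R) x a : is_derive f (-x) a -> is_derive (fun t => f (- t)) x (- a).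
Proof. intros H. eapply D_eq. apply (is_derive_comp f (fun t => - t) x a (-1)). exact H.
  eapply D_eq. apply (is_derive_opp (fun t => t) x 1). apply D_id. simpl. unfold opp; simpl. ring.
  unfold scal; simpl. unfold mult; simpl. ring. Qed.

Lemma mul_pn a b : 0 < a -> b < 0 -> a*b < 0. Proof. intros. nra. Qed.
Lemma mul_pp a b : 0 < a -> 0 < b -> 0 < a*b. Proof. intros. nra. Qed.
Lemma mvt_open (f df : R -> R) c d : c < d -> (forall t, c <= t <= d -> is_derive f t (df t)) ->
  exists z, c < z < d /\ f d - f c = df z * (d - c).
Proof.
  intros Hcd H.
  destruct (MVT_cor2 f df c d Hcd) as [z [Hz1 Hz2]].
  - intros t Ht. apply is_derive_Reals. apply H. exact Ht.
  - exists z. split; auto.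
Qed.

Lemma deriv_zero_const (f : R -> R) c d : c <= d -> (forall t, c <= t <= d -> is_derive f t 0) -> f c = f d.
Proof.
  intros Hcd H. destruct Hcd as [Hcd|Hcd]; [|subst; reflexivity].
  destruct (mvt_open f (fun _ => 0) c d Hcd H) as [z [_ Hz]]. lra.
Qed.

Lemma deriv_neg_strict (f df : R -> R) c d : c < d -> (forall t, c <= t <= d -> is_derive f t (df t)) ->
  (forall t, c < t < d -> df t < 0) -> f d < f c.
Proof.
  intros Hcd H Hn. destruct (mvt_open f df c d Hcd H) as [z [Hz Hz']].
  specialize (Hn z Hz). nra.
Qed.

Lemma deriv_pos_strict (f df : R -> R) c d : c < d -> (forall t, c <= t <= d -> is_derive f t (df t)) ->
  (forall t, c < t < d -> 0 < df t) -> f c < f d.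
Proof.
  intros Hcd H Hn. destruct (mvt_open f df c d Hcd H) as [z [Hz Hz']].
  specialize (Hn z Hz). nra.
Qed.

Lemma deriv_nonpos (f df : R -> R) c d : c <= d -> (forall t, c <= t <= d -> is_derive f t (df t)) ->
  (forall t, c < t < d -> df t <= 0) -> f d <= f c.
Proof.
  intros Hcd H Hn. destruct Hcd as [Hcd|Hcd]; [|subst; lra].
  destruct (mvt_open f df c d Hcd H) as [z [Hz Hz']].
  specialize (Hn z Hz). nra.
Qed.

Lemma cos_shift x : cos (x - 2*PI) = cos x.
Proof. rewrite cos_minus, cos_2PI, sin_2PI. ring. Qed.
Lemma sin_shift x : sin (x - 2*PI) = sin x.
Proof. rewrite sin_minus, cos_2PI, sin_2PI. ring. Qed.
Lemma sin_3PI2 : sin (3*(PI/2)) = -1.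
Proof. replace (3*(PI/2)) with (PI + PI/2) by field. rewrite sin_plus, sin_PI, cos_PI, sin_PI2. ring. Qed.
Lemma sin_mPI2 : sin (-(PI/2)) = -1.
Proof. rewrite sin_neg, sin_PI2. ring. Qed.
Lemma sin_mpi_x x : sin (-PI - x) = sin x.
Proof. rewrite sin_minus, sin_neg, cos_neg, sin_PI, cos_PI. ring. Qed.
Lemma sin_le1 x : sin x <= 1.
Proof. destruct (SIN_bound x); lra. Qed.
Lemma sin_gem1 x : -1 <= sin x.
Proof. destruct (SIN_bound x); lra. Qed.

Lemma angle_of al be : al*al + be*be = 1 -> exists om, - PI < om <= PI /\ cos om = al /\ sin om = be.
Proof.
  intros H.
  assert (Hal : -1 <= al <= 1) by (split; nra).
  destruct (Rle_or_lt 0 be) as [hb|hb].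
  - exists (acos al). pose proof (acos_bound al). pose proof PI_RGT_0.
    split; [lra|split]. apply cos_acos; auto.
    rewrite sin_acos; auto. unfold Rsqr. replace (1 - al*al) with (be*be) by lra.
    apply sqrt_square; auto.
  - assert (Hal' : -1 < al < 1) by (split; nra).
    exists (- acos al). pose proof (acos_bound_lt al Hal').
    split; [lra|split]. rewrite cos_neg. apply cos_acos; auto.
    rewrite sin_neg, sin_acos; auto. unfold Rsqr. replace (1 - al*al) with ((-be)*(-be)) by lra.
    rewrite sqrt_square; lra.
Qed.



Section Frame.
Variables (a b : R) (g1 g2 e1 e2 v k Th : R -> R).
Hypothesis Hg1 : forall t, a <= t <= b -> is_derive g1 t (v t * e1 t).
Hypothesis Hg2 : forall t, a <= t <= b -> is_derive g2 t (v t * e2 t).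
Hypothesis He1 : forall t, a <= t <= b -> is_derive e1 t (k t * (- e2 t)).
Hypothesis He2 : forall t, a <= t <= b -> is_derive e2 t (k t * e1 t).
Hypothesis HTh : forall t, a <= t <= b -> is_derive Th t (k t).
Hypothesis Hunit : forall t, a <= t <= b -> e1 t * e1 t + e2 t * e2 t = 1.
Hypothesis Hv : forall t, a <= t <= b -> 0 < v t.
Hypothesis Hk : forall t, a <= t <= b -> 0 < k t.

Lemma rot s t : a <= s <= b -> a <= t <= b ->
  e1 t = cos (Th t - Th s) * e1 s - sin (Th t - Th s) * e2 s /\
  e2 t = cos (Th t - Th s) * e2 s + sin (Th t - Th s) * e1 s.
Proof.
  intros Hs Ht.
  set (E := fun u => (e1 u - (cos (Th u - Th s) * e1 s - sin (Th u - Th s) * e2 s))^2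
                   + (e2 u - (cos (Th u - Th s) * e2 s + sin (Th u - Th s) * e1 s))^2).
  assert (HD : forall u, a <= u <= b -> is_derive E u 0).
  { intros u Hu. unfold E.
    assert (Hth : is_derive (fun w => Th w - Th s) u (k u - 0)) by (apply D_minus; [apply HTh; auto|apply D_const]).
    eapply D_eq.
    - apply D_plus; apply (is_derive_pow (fun w => _) 2 u).
      + apply D_minus; [apply He1; auto|]. apply D_minus.
        * apply D_mult; [apply D_cos, Hth|apply D_const].
        * apply D_mult; [apply D_sin, Hth|apply D_const].
      + apply D_minus; [apply He2; auto|]. apply D_plus.
        * apply D_mult; [apply D_cos, Hth|apply D_const].
        * apply D_mult; [apply D_sin, Hth|apply D_const].
    - simpl. ring. }
  assert (Es : E s = 0).
  { unfold E. rewrite Rminus_diag, cos_0, sin_0. ring. }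
  assert (Et : E t = 0).
  { destruct (Rle_or_lt s t) as [h|h].
    - rewrite <- Es. symmetry. apply deriv_zero_const; auto. intros u Hu. apply HD. lra.
    - rewrite <- Es. apply deriv_zero_const; [lra|]. intros u Hu. apply HD. lra. }
  unfold E in Et.
  set (A := e1 t - _) in Et. set (B := e2 t - _) in Et.
  assert (A = 0 /\ B = 0) by (split; nra).
  unfold A, B in H. lra.
Qed.


Lemma Th_lt s t : a <= s -> t <= b -> s < t -> Th s < Th t.
Proof.
  intros Hs Ht Hst. apply (deriv_pos_strict Th k s t Hst).
  - intros u Hu. apply HTh. lra.
  - intros u Hu. apply Hk. lra.
Qed.

Lemma Th_le s t : a <= s -> t <= b -> s <= t -> Th s <= Th t.
Proof.
  intros Hs Ht Hst. destruct Hst as [h|h]; [left; apply Th_lt; auto|subst; lra].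
Qed.

Lemma sin_rel_n s t : a <= s <= b -> a <= t <= b ->
  e1 t * (- e2 s) + e2 t * e1 s = sin (Th t - Th s).
Proof.
  intros Hs Ht. destruct (rot s t Hs Ht) as [R1 R2]. rewrite R1, R2.
  transitivity (sin (Th t - Th s) * (e1 s * e1 s + e2 s * e2 s)); [ring|].
  rewrite (Hunit s Hs). ring.
Qed.

Lemma pair_flat r ti tj : 0 < r -> a <= ti -> tj <= b -> ti < tj -> Th tj - Th ti <= PI ->
  (forall t, a <= t <= b -> r * k t < v t) ->
  ((g1 tj - r * e2 tj) - (g1 ti - r * e2 ti)) * (- e2 tj)
   + ((g2 tj + r * e1 tj) - (g2 ti + r * e1 ti)) * e1 tj < 0 /  0 < ((g1 tj - r * e2 tj) - (g1 ti - r * e2 ti)) * (- e2 ti)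
   + ((g2 tj + r * e1 tj) - (g2 ti + r * e1 ti)) * e1 ti.
Proof.
  intros Hr Ha Hb Hij HPI Hflat.
  assert (HQ : forall s t, a <= s <= b -> a <= t <= b ->
     is_derive (fun u => (g1 u - r * e2 u) * (- e2 s) + (g2 u + r * e1 u) * e1 s) t
               ((v t - r * k t) * sin (Th t - Th s))).
  { intros s t Hs Ht. eapply D_eq.
    - apply D_plus.
      + apply D_mult; [|apply D_const].
        apply D_minus; [apply Hg1; auto|]. apply (is_derive_scal e2 t r). apply He2; auto.
      + apply D_mult; [|apply D_const].
        apply D_plus; [apply Hg2; auto|]. apply (is_derive_scal e1 t r). apply He1; auto.
    - rewrite <- sin_rel_n; auto. simpl. ring. }
  split.
  - set (F := fun u => (g1 u - r * e2 u) * (- e2 tj) + (g2 u + r * e1 u) * e1 tj).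
    assert (F tj < F ti).
    { apply (deriv_neg_strict F (fun t => (v t - r * k t) * sin (Th t - Th tj)) ti tj Hij).
      - intros t Ht. apply HQ; lra.
      - intros t Ht. assert (0 < v t - r * k t) by (pose proof (Hflat t ltac:(lra)); lra).
        assert (sin (Th t - Th tj) < 0).
        { apply sin_lt_0_var.
          - pose proof (Th_lt ti t Ha ltac:(lra) ltac:(lra)). lra.
          - pose proof (Th_lt t tj ltac:(lra) Hb ltac:(lra)). lra. }
        apply mul_pn; assumption. }
    unfold F in H. lra.
  - set (F := fun u => (g1 u - r * e2 u) * (- e2 ti) + (g2 u + r * e1 u) * e1 ti).
    assert (F ti < F tj).
    { apply (deriv_pos_strict F (fun t => (v t - r * k t) * sin (Th t - Th ti)) ti tj Hij).
      - intros t Ht. apply HQ; lra.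
      - intros t Ht. assert (0 < v t - r * k t) by (pose proof (Hflat t ltac:(lra)); lra).
        assert (0 < sin (Th t - Th ti)).
        { apply sin_gt_0.
          - pose proof (Th_lt ti t Ha ltac:(lra) ltac:(lra)). lra.
          - pose proof (Th_lt t tj ltac:(lra) Hb ltac:(lra)). lra. }
        apply mul_pp; assumption. }
    unfold F in H. lra.
Qed.


Lemma cos_rel_w ti t om : a <= ti <= b -> a <= t <= b ->
  e1 t * (cos om * e1 ti - sin om * e2 ti) + e2 t * (cos om * e2 ti + sin om * e1 ti)
  = cos (Th t - Th ti - om).
Proof.
  intros Hs Ht. destruct (rot ti t Hs Ht) as [R1 R2]. rewrite R1, R2.
  rewrite (cos_minus (Th t - Th ti) om).
  transitivity ((cos (Th t - Th ti) * cos om + sin (Th t - Th ti) * sin om) * (e1 ti * e1 ti + e2 ti * e2 ti)); [ring|].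
  rewrite (Hunit ti Hs). ring.
Qed.

Lemma sin_rel_w ti t om : a <= ti <= b -> a <= t <= b ->
  - e2 t * (cos om * e1 ti - sin om * e2 ti) + e1 t * (cos om * e2 ti + sin om * e1 ti)
  = - sin (Th t - Th ti - om).
Proof.
  intros Hs Ht. destruct (rot ti t Hs Ht) as [R1 R2]. rewrite R1, R2.
  rewrite (sin_minus (Th t - Th ti) om).
  transitivity (- (sin (Th t - Th ti) * cos om - cos (Th t - Th ti) * sin om) * (e1 ti * e1 ti + e2 ti * e2 ti)); [ring|].
  rewrite (Hunit ti Hs). ring.
Qed.

Lemma pieces rr ti om p q : 0 < rr -> a <= ti <= b -> a <= p -> p <= q -> q <= b ->
  (forall t, a <= t <= b -> v t <= rr * k t) ->
  let H := fun t => (g1 t - g1 ti) * (cos om * e1 ti - sin om * e2 ti)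
                  + (g2 t - g2 ti) * (cos om * e2 ti + sin om * e1 ti) in
  ((forall t, p <= t <= q -> 0 <= cos (Th t - Th ti - om)) ->
     H q - H p <= rr * (sin (Th q - Th ti - om) - sin (Th p - Th ti - om))) /\
  ((forall t, p <= t <= q -> cos (Th t - Th ti - om) <= 0) -> H q <= H p).
Proof.
  intros Hrr Hti Hp Hpq Hq Hcurv H.
  assert (DH : forall t, a <= t <= b -> is_derive H t (v t * cos (Th t - Th ti - om))).
  { intros t Ht. unfold H. eapply D_eq.
    - apply D_plus.
      + apply D_mult; [apply D_minus; [apply Hg1; auto|apply D_const]|apply D_const].
      + apply D_mult; [apply D_minus; [apply Hg2; auto|apply D_const]|apply D_const].
    - rewrite <- cos_rel_w; auto. simpl. ring. }
  split.
  - intros Hc.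
    set (H2 := fun t => H t + rr * (- e2 t * (cos om * e1 ti - sin om * e2 ti) + e1 t * (cos om * e2 ti + sin om * e1 ti))).
    assert (H2 q <= H2 p).
    { apply (deriv_nonpos H2 (fun t => (v t - rr * k t) * cos (Th t - Th ti - om)) p q Hpq).
      - intros t Ht. unfold H2. eapply D_eq.
        + apply D_plus; [apply DH; lra|]. apply (is_derive_scal _ t rr).
          apply D_plus.
          * apply D_mult; [|apply D_const]. apply (is_derive_opp e2 t). apply He2; lra.
          * apply D_mult; [|apply D_const]. apply He1; lra.
        + rewrite <- cos_rel_w; [|auto|lra]. simpl. unfold opp; simpl. ring.
      - intros t Ht. assert (v t - rr * k t <= 0) by (pose proof (Hcurv t ltac:(lra)); lra).
        pose proof (Hc t ltac:(lra)). nra. }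
    unfold H2 in H0. cbv beta in H0. rewrite !sin_rel_w in H0; lra.
  - intros Hc.
    apply (deriv_nonpos H (fun t => v t * cos (Th t - Th ti - om)) p q Hpq).
    + intros t Ht. apply DH. lra.
    + intros t Ht. pose proof (Hv t ltac:(lra)). pose proof (Hc t ltac:(lra)). nra.
Qed.


Lemma Th_ivt c d y : a <= c -> c <= d -> d <= b -> Th c <= y <= Th d ->
  exists t, c <= t <= d /\ Th t = y.
Proof.
  intros Hc Hcd Hd Hy.
  destruct (Req_dec (Th c) y) as [e|ne]; [exists c; split; [lra|exact e]|].
  destruct (Req_dec (Th d) y) as [e|ne']; [exists d; split; [lra|exact e]|].
  assert (Hcd' : c < d) by (destruct Hcd as [h|h]; [exact h|subst; lra]).
  destruct (Ranalysis5.IVT_interv (fun t => Th t - y) c d) as [z [Hz Hz']].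
  - intros t Ht. apply continuity_pt_minus; [|apply continuity_pt_const; intros ? ?; reflexivity].
    apply continuity_pt_filterlim. apply (ex_derive_continuous Th t).
    exists (k t). apply HTh. lra.
  - exact Hcd'.
  - lra.
  - lra.
  - exists z. split; [exact Hz|lra].
Qed.


Lemma support rr ti tj om : 0 < rr -> a <= ti -> ti < tj -> tj <= b -> Th tj - Th ti <= PI ->
  (forall t, a <= t <= b -> v t <= rr * k t) -> - PI < om <= PI ->
  (g1 tj - g1 ti) * (cos om * e1 ti - sin om * e2 ti)
  + (g2 tj - g2 ti) * (cos om * e2 ti + sin om * e1 ti) <= rr * (1 + sin om).
Proof.
  intros Hrr Ha Hij Hb HPI Hcurv Hom.
  set (H := fun t => (g1 t - g1 ti) * (cos om * e1 ti - sin om * e2 ti)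
                  + (g2 t - g2 ti) * (cos om * e2 ti + sin om * e1 ti)).
  change (H tj <= rr * (1 + sin om)).
  assert (H0 : H ti = 0) by (unfold H; ring).
  assert (HP : forall p q, ti <= p -> p <= q -> q <= tj ->
     ((forall t, p <= t <= q -> 0 <= cos (Th t - Th ti - om)) ->
       H q - H p <= rr * (sin (Th q - Th ti - om) - sin (Th p - Th ti - om))) /\
     ((forall t, p <= t <= q -> cos (Th t - Th ti - om) <= 0) -> H q <= H p)).
  { intros p q h1 h2 h3. exact (pieces rr ti om p q Hrr ltac:(lra) ltac:(lra) h2 ltac:(lra) Hcurv). }
  set (D := Th tj - Th ti).
  assert (HD : 0 < D) by (unfold D; pose proof (Th_lt ti tj Ha Hb Hij); lra).
  assert (Hrng : forall p q t, ti <= p -> p <= t <= q -> q <= tj ->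
      Th p - Th ti <= Th t - Th ti <= Th q - Th ti).
  { intros p q t h1 h2 h3. pose proof (Th_le p t ltac:(lra) ltac:(lra) ltac:(lra)).
    pose proof (Th_le t q ltac:(lra) ltac:(lra) ltac:(lra)). lra. }
  assert (Z : Th ti - Th ti - om = - om) by ring.
  pose proof PI_RGT_0 as Hpi.
  pose proof (sin_le1 (Th tj - Th ti - om)) as Hs1.
  pose proof (sin_gem1 om) as Hs2.
  destruct (Rle_or_lt om (PI/2)) as [Ho1|Ho1]; [destruct (Rle_or_lt (-(PI/2)) om) as [Ho2|Ho2]|].
  -
    destruct (Rle_or_lt D (om + PI/2)) as [Hc|Hc].
    + destruct (HP ti tj (Rle_refl _) (Rlt_le _ _ Hij) (Rle_refl _)) as [P1 _].
      assert (P := P1 ltac:(intros t Ht; pose proof (Hrng ti tj t (Rle_refl _) Ht (Rle_refl _));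
                    apply cos_ge_0; unfold D in Hc; lra)).
      rewrite Z, sin_neg in P.
      assert (rr * (sin (Th tj - Th ti - om) - - sin om) <= rr * (1 + sin om)) by (apply Rmult_le_compat_l; lra).
      lra.
    + destruct (Th_ivt ti tj (Th ti + om + PI/2) Ha (Rlt_le _ _ Hij) Hb) as [ts [Hts Hts']].
      { unfold D in Hc; lra. }
      destruct (HP ti ts (Rle_refl _) ltac:(lra) ltac:(lra)) as [P1 _].
      destruct (HP ts tj ltac:(lra) ltac:(lra) (Rle_refl _)) as [_ P2].
      assert (Q1 := P1 ltac:(intros t Ht; pose proof (Hrng ti ts t (Rle_refl _) Ht ltac:(lra));
                    apply cos_ge_0; lra)).
      assert (Q2 := P2 ltac:(intros t Ht; pose proof (Hrng ts tj t ltac:(lra) Ht (Rle_refl _));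
                    apply cos_le_0; unfold D in *; lra)).
      rewrite Z, sin_neg in Q1. replace (Th ts - Th ti - om) with (PI/2) in Q1 by lra.
      rewrite sin_PI2 in Q1. lra.
  -
    destruct (Rle_or_lt D (om + 3*(PI/2))) as [Hc|Hc].
    + destruct (HP ti tj (Rle_refl _) (Rlt_le _ _ Hij) (Rle_refl _)) as [_ P2].
      assert (P := P2 ltac:(intros t Ht; pose proof (Hrng ti tj t (Rle_refl _) Ht (Rle_refl _));
                    apply cos_le_0; unfold D in Hc; lra)).
      assert (0 <= rr * (1 + sin om)) by (apply Rmult_le_pos; lra). lra.
    + destruct (Th_ivt ti tj (Th ti + om + 3*(PI/2)) Ha (Rlt_le _ _ Hij) Hb) as [ts [Hts Hts']].
      { unfold D in Hc; lra. }
      destruct (HP ti ts (Rle_refl _) ltac:(lra) ltac:(lra)) as [_ P1].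
      destruct (HP ts tj ltac:(lra) ltac:(lra) (Rle_refl _)) as [P2 _].
      assert (Q1 := P1 ltac:(intros t Ht; pose proof (Hrng ti ts t (Rle_refl _) Ht ltac:(lra));
                    apply cos_le_0; lra)).
      assert (Q2 := P2 ltac:(intros t Ht; pose proof (Hrng ts tj t ltac:(lra) Ht (Rle_refl _));
                    rewrite <- cos_shift; apply cos_ge_0; unfold D in *; lra)).
      replace (Th ts - Th ti - om) with (3*(PI/2)) in Q2 by lra.
      rewrite sin_3PI2 in Q2.
      assert (sin (Th tj - Th ti - om) <= sin om).
      { rewrite <- sin_shift, <- (sin_mpi_x om). apply sin_incr_1; unfold D in *; lra. }
      assert (rr * sin (Th tj - Th ti - om) <= rr * sin om) by (apply Rmult_le_compat_l; lra).
      lra.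
  -
    destruct (Rle_or_lt D (om - PI/2)) as [Hc|Hc].
    + destruct (HP ti tj (Rle_refl _) (Rlt_le _ _ Hij) (Rle_refl _)) as [_ P2].
      assert (P := P2 ltac:(intros t Ht; pose proof (Hrng ti tj t (Rle_refl _) Ht (Rle_refl _));
                    rewrite <- cos_neg; apply cos_le_0; unfold D in Hc; lra)).
      assert (0 <= rr * (1 + sin om)) by (apply Rmult_le_pos; lra). lra.
    + destruct (Th_ivt ti tj (Th ti + om - PI/2) Ha (Rlt_le _ _ Hij) Hb) as [ts [Hts Hts']].
      { unfold D in Hc; lra. }
      destruct (HP ti ts (Rle_refl _) ltac:(lra) ltac:(lra)) as [_ P1].
      destruct (HP ts tj ltac:(lra) ltac:(lra) (Rle_refl _)) as [P2 _].
      assert (Q1 := P1 ltac:(intros t Ht; pose proof (Hrng ti ts t (Rle_refl _) Ht ltac:(lra));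
                    rewrite <- cos_neg; apply cos_le_0; lra)).
      assert (Q2 := P2 ltac:(intros t Ht; pose proof (Hrng ts tj t ltac:(lra) Ht (Rle_refl _));
                    apply cos_ge_0; unfold D in *; lra)).
      replace (Th ts - Th ti - om) with (-(PI/2)) in Q2 by lra.
      rewrite sin_mPI2 in Q2.
      assert (sin (Th tj - Th ti - om) <= sin om).
      { rewrite <- (sin_PI_x om). apply sin_incr_1; unfold D in *; lra. }
      assert (rr * sin (Th tj - Th ti - om) <= rr * sin om) by (apply Rmult_le_compat_l; lra).
      lra.
Qed.


Lemma inside_fwd rr ti tj : 0 < rr -> a <= ti -> ti < tj -> tj <= b -> Th tj - Th ti <= PI ->
  (forall t, a <= t <= b -> v t <= rr * k t) ->
  (g1 tj - g1 ti) * (g1 tj - g1 ti) + (g2 tj - g2 ti) * (g2 tj - g2 ti)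
  <= 2 * rr * ((g1 tj - g1 ti) * (- e2 ti) + (g2 tj - g2 ti) * e1 ti).
Proof.
  intros Hrr Ha Hij Hb HPI Hcurv.
  set (X := g1 tj - g1 ti). set (Y := g2 tj - g2 ti).
  pose proof (Hunit ti ltac:(lra)) as U.
  set (Xf := X * e1 ti + Y * e2 ti). set (Yf := X * (- e2 ti) + Y * e1 ti).
  assert (HN : X*X + Y*Y = Xf*Xf + Yf*Yf).
  { unfold Xf, Yf. transitivity ((X*X+Y*Y)*(e1 ti * e1 ti + e2 ti * e2 ti)); [rewrite U; ring|ring]. }
  rewrite HN. fold Yf.
  destruct (Rle_or_lt (Xf*Xf + Yf*Yf) (2*rr*Yf)) as [h|h]; [exact h|exfalso].
  set (L2 := Xf*Xf + (Yf - rr)*(Yf - rr)).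
  assert (HL2 : rr*rr < L2) by (unfold L2; nra).
  set (L := sqrt L2).
  assert (HLL : L*L = L2) by (apply sqrt_sqrt; nra).
  assert (HL : rr < L).
  { destruct (Rle_or_lt L rr) as [h'|h']; [|exact h']. exfalso.
    assert (0 <= L) by apply sqrt_pos. nra. }
  destruct (angle_of (Xf/L) ((Yf - rr)/L)) as [om [Hom [Hc Hs]]].
  { apply (Rmult_eq_reg_r (L*L)); [|nra]. field_simplify; [|lra]. unfold L2 in HLL. nra. }
  pose proof (support rr ti tj om Hrr Ha Hij Hb HPI Hcurv Hom) as Sup.
  fold X Y in Sup. rewrite Hc, Hs in Sup.
  assert (E : X * (Xf / L * e1 ti - (Yf - rr) / L * e2 ti) + Y * (Xf / L * e2 ti + (Yf - rr) / L * e1 ti)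
              = (Xf * Xf + (Yf - rr) * Yf) / L) by (unfold Xf, Yf; field; lra).
  rewrite E in Sup.
  assert (Sup' : Xf * Xf + (Yf - rr) * Yf <= rr * (L + (Yf - rr))).
  { apply (Rmult_le_reg_r (/ L)); [apply Rinv_0_lt_compat; lra|].
    replace (rr * (L + (Yf - rr)) * / L) with (rr * (1 + (Yf - rr) / L)) by (field; lra).
    exact Sup. }
  assert (L2 <= rr * L) by (unfold L2; nra).
  nra.
Qed.


Lemma flat_sign r ti tj : 0 < r -> a <= ti -> tj <= b -> ti < tj -> Th tj - Th ti <= PI ->
  (forall t, a <= t <= b -> r * k t < v t) ->
  g1 ti * g1 ti + g2 ti * g2 ti = r * r -> g1 tj * g1 tj + g2 tj * g2 tj = r * r ->
  g1 ti * e1 ti + g2 ti * e2 ti < 0 /\ 0 < g1 tj * e1 tj + g2 tj * e2 tj.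
Proof.
  intros Hr Ha Hb Hij HPI Hflat Ci Cj.
  destruct (pair_flat r ti tj Hr Ha Hb Hij HPI Hflat) as [PA PB].
  assert (Hi : a <= ti <= b) by lra. assert (Hj : a <= tj <= b) by lra.
  pose proof (Hunit ti Hi) as Ui. pose proof (Hunit tj Hj) as Uj.
  assert (Hs0 : 0 <= sin (Th tj - Th ti)).
  { apply sin_ge_0; [pose proof (Th_lt ti tj Ha Hb Hij); lra|lra]. }
  assert (Hs : sin (Th tj - Th ti) * sin (Th tj - Th ti) + cos (Th tj - Th ti) * cos (Th tj - Th ti) = 1).
  { pose proof (sin2_cos2 (Th tj - Th ti)). unfold Rsqr in H. lra. }
  destruct (rot ti tj Hi Hj) as [R1 R2].
  set (s := sin (Th tj - Th ti)) in *. set (co := cos (Th tj - Th ti)) in *.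
  set (bi := g1 ti * e1 ti + g2 ti * e2 ti).
  set (ci := g1 ti * (- e2 ti) + g2 ti * e1 ti + r).
  set (bj := g1 tj * e1 tj + g2 tj * e2 tj).
  set (cj := g1 tj * (- e2 tj) + g2 tj * e1 tj + r).
  assert (Ei : bi*bi + ci*ci = 2*r*ci).
  { assert (L : bi*bi + (ci - r)*(ci - r) = (g1 ti * g1 ti + g2 ti * g2 ti)*(e1 ti * e1 ti + e2 ti * e2 ti))
      by (unfold bi, ci; ring).
    rewrite Ci, Ui in L. nra. }
  assert (Ej : bj*bj + cj*cj = 2*r*cj).
  { assert (L : bj*bj + (cj - r)*(cj - r) = (g1 tj * g1 tj + g2 tj * g2 tj)*(e1 tj * e1 tj + e2 tj * e2 tj))
      by (unfold bj, cj; ring).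
    rewrite Cj, Uj in L. nra. }
  assert (G1 : cj - co*ci + s*bi < 0).
  { assert (D : ((g1 tj - r * e2 tj) - (g1 ti - r * e2 ti)) * (- e2 tj)
      + ((g2 tj + r * e1 tj) - (g2 ti + r * e1 ti)) * e1 tj - (cj - co*ci + s*bi)
      = r*((s*s+co*co)*(e1 ti * e1 ti + e2 ti * e2 ti) - 1) - r*co*((e1 ti * e1 ti + e2 ti * e2 ti) - 1)).
    { unfold cj, ci, bi. rewrite R1, R2. ring. }
    rewrite Ui, Hs in D. lra. }
  assert (G2 : ci - co*cj - s*bj < 0).
  { assert (D : ((g1 tj - r * e2 tj) - (g1 ti - r * e2 ti)) * (- e2 ti)
      + ((g2 tj + r * e1 tj) - (g2 ti + r * e1 ti)) * e1 ti - (co*cj + s*bj - ci)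
      = (1 - (s*s+co*co))*(- g1 tj * e2 ti + g2 tj * e1 ti) + r*co*((e1 ti * e1 ti + e2 ti * e2 ti) - 1)
        - r*((e1 ti * e1 ti + e2 ti * e2 ti) - 1)).
    { unfold cj, ci, bj. rewrite R1, R2. ring. }
    rewrite Ui, Hs in D. lra. }
  split.
  - assert (Hbi : 0 < - bi).
    { assert (E1' : (-bj)*(-bj) + cj*cj = 2*r*cj) by (rewrite <- Ej; ring).
      assert (E2' : (-bi)*(-bi) + ci*ci = 2*r*ci) by (rewrite <- Ei; ring).
      assert (G1' : ci - co*cj + s*(-bj) < 0) by lra.
      assert (G2' : cj - co*ci - s*(-bi) < 0) by lra.
      exact (frame_bc r (-bj) cj (-bi) ci s co Hr Hs Hs0 E1' E2' G1' G2'). }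
    lra.
  - exact (frame_bc r bi ci bj cj s co Hr Hs Hs0 Ei Ej G1 G2).
Qed.

End Frame.

Lemma D_opp (f : R -> R) x a : is_derive f x a -> is_derive (fun t => - f t) x (- a).
Proof. intros H. apply (is_derive_opp f x a H). Qed.

Lemma inside_bwd (a b : R) (g1 g2 e1 e2 v k Th : R -> R) :
  (forall t, a <= t <= b -> is_derive g1 t (v t * e1 t)) ->
  (forall t, a <= t <= b -> is_derive g2 t (v t * e2 t)) ->
  (forall t, a <= t <= b -> is_derive e1 t (k t * (- e2 t))) ->
  (forall t, a <= t <= b -> is_derive e2 t (k t * e1 t)) ->
  (forall t, a <= t <= b -> is_derive Th t (k t)) ->
  (forall t, a <= t <= b -> e1 t * e1 t + e2 t * e2 t = 1) ->
  (forall t, a <= t <= b -> 0 < v t) ->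
  (forall t, a <= t <= b -> 0 < k t) ->
  forall rr ti tj, 0 < rr -> a <= ti -> ti < tj -> tj <= b -> Th tj - Th ti <= PI ->
  (forall t, a <= t <= b -> v t <= rr * k t) ->
  (g1 ti - g1 tj) * (g1 ti - g1 tj) + (g2 ti - g2 tj) * (g2 ti - g2 tj)
  <= 2 * rr * ((g1 ti - g1 tj) * (- e2 tj) + (g2 ti - g2 tj) * e1 tj).
Proof.
  intros Hg1 Hg2 He1 He2 HTh Hunit Hv Hk rr ti tj Hrr Ha Hij Hb HPI Hcurv.
  assert (R := inside_fwd (-b) (-a) (fun t => g1 (-t)) (fun t => - g2 (-t)) (fun t => - e1 (-t))
     (fun t => e2 (-t)) (fun t => v (-t)) (fun t => k (-t)) (fun t => - Th (-t))).
  simpl in R.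
  assert (Hm : forall t, -b <= t <= -a -> a <= -t <= b) by (intros; lra).
  specialize (R ltac:(intros t Ht; eapply D_eq; [apply D_opp_arg, Hg1, Hm, Ht|simpl; ring])).
  specialize (R ltac:(intros t Ht; eapply D_eq; [apply D_opp, D_opp_arg, Hg2, Hm, Ht|simpl; ring])).
  specialize (R ltac:(intros t Ht; eapply D_eq; [apply D_opp, D_opp_arg, He1, Hm, Ht|simpl; ring])).
  specialize (R ltac:(intros t Ht; eapply D_eq; [apply D_opp_arg, He2, Hm, Ht|simpl; ring])).
  specialize (R ltac:(intros t Ht; eapply D_eq; [apply D_opp, D_opp_arg, HTh, Hm, Ht|simpl; ring])).
  specialize (R ltac:(intros t Ht; pose proof (Hunit (-t) (Hm t Ht)); lra)).
  specialize (R ltac:(intros t Ht; apply Hv, Hm, Ht)).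
  specialize (R ltac:(intros t Ht; apply Hk, Hm, Ht)).
  specialize (R rr (-tj) (-ti) Hrr ltac:(lra) ltac:(lra) ltac:(lra)).
  rewrite !Ropp_involutive in R.
  specialize (R ltac:(lra) ltac:(intros t Ht; apply Hcurv, Hm, Ht)).
  lra.
Qed.


Lemma conv_cap r rr px py qx qy n1 n2 : 0 < rr -> rr < r ->
  px*px+py*py = r*r -> qx*qx+qy*qy = r*r -> ~(qx = px /\ qy = py) -> n1*n1+n2*n2 = 1 ->
  (qx-px)*(qx-px)+(qy-py)*(qy-py) <= 2*rr*((qx-px)*n1 + (qy-py)*n2) ->
  0 < (qx-px)*(px + r*n1) + (qy-py)*(py + r*n2).
Proof.
  intros Hrr Hr Hp Hq Hne Hn H.
  set (d2 := (qx-px)*(qx-px)+(qy-py)*(qy-py)) in *.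
  set (dn := (qx-px)*n1 + (qy-py)*n2) in *.
  assert (Hd2 : 0 < d2).
  { destruct (Rle_or_lt d2 0) as [h|h]; [|exact h]. exfalso. apply Hne.
    unfold d2 in h.
    pose proof (Rle_0_sqr (qx-px)). pose proof (Rle_0_sqr (qy-py)). unfold Rsqr in *.
    assert (z1 : (qx-px)*(qx-px) = 0) by lra. assert (z2 : (qy-py)*(qy-py) = 0) by lra.
    apply Rmult_integral in z1. apply Rmult_integral in z2. split; lra. }
  assert (Hdn : 0 < dn) by nra.
  assert (HdP : (qx-px)*px + (qy-py)*py = - d2 / 2) by (unfold d2; nra).
  assert (2*rr*dn < 2*r*dn) by nra.
  replace ((qx-px)*(px + r*n1) + (qy-py)*(py + r*n2)) with (((qx-px)*px + (qy-py)*py) + r*dn) by (unfold dn; ring).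
  rewrite HdP. lra.
Qed.

Section Frame2.
Variables (a b : R) (g1 g2 e1 e2 v k Th : R -> R).
Hypothesis Hg1 : forall t, a <= t <= b -> is_derive g1 t (v t * e1 t).
Hypothesis Hg2 : forall t, a <= t <= b -> is_derive g2 t (v t * e2 t).
Hypothesis He1 : forall t, a <= t <= b -> is_derive e1 t (k t * (- e2 t)).
Hypothesis He2 : forall t, a <= t <= b -> is_derive e2 t (k t * e1 t).
Hypothesis HTh : forall t, a <= t <= b -> is_derive Th t (k t).
Hypothesis Hunit : forall t, a <= t <= b -> e1 t * e1 t + e2 t * e2 t = 1.
Hypothesis Hv : forall t, a <= t <= b -> 0 < v t.
Hypothesis Hk : forall t, a <= t <= b -> 0 < k t.

Lemma flat_core r s1 s2 s3 : 0 < r -> a <= s1 -> s1 < s2 -> s2 < s3 -> s3 <= b ->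
  Th s3 - Th s1 <= PI -> (forall t, a <= t <= b -> r * k t < v t) ->
  g1 s1 * g1 s1 + g2 s1 * g2 s1 = r * r ->
  g1 s2 * g1 s2 + g2 s2 * g2 s2 = r * r ->
  g1 s3 * g1 s3 + g2 s3 * g2 s3 = r * r -> False.
Proof.
  intros Hr H1 H12 H23 H3 HPI Hf C1 C2 C3.
  assert (T1 : Th s1 <= Th s2) by (eapply Th_le; eauto; lra).
  assert (T2 : Th s2 <= Th s3) by (eapply Th_le; eauto; lra).
  assert (A : g1 s1 * e1 s1 + g2 s1 * e2 s1 < 0 /\ 0 < g1 s2 * e1 s2 + g2 s2 * e2 s2).
  { eapply flat_sign; eauto; lra. }
  assert (B : g1 s2 * e1 s2 + g2 s2 * e2 s2 < 0 /\ 0 < g1 s3 * e1 s3 + g2 s3 * e2 s3).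
  { eapply flat_sign; eauto; lra. }
  lra.
Qed.

Lemma curvy_core r rr s1 s2 s3 : 0 < rr -> rr < r -> a <= s1 -> s1 < s2 -> s2 < s3 -> s3 <= b ->
  Th s3 - Th s1 <= PI -> (forall t, a <= t <= b -> v t <= rr * k t) ->
  g1 s1 * g1 s1 + g2 s1 * g2 s1 = r * r ->
  g1 s2 * g1 s2 + g2 s2 * g2 s2 = r * r ->
  g1 s3 * g1 s3 + g2 s3 * g2 s3 = r * r ->
  ~ (g1 s1 = g1 s2 /\ g2 s1 = g2 s2) -> ~ (g1 s1 = g1 s3 /\ g2 s1 = g2 s3) ->
  ~ (g1 s2 = g1 s3 /\ g2 s2 = g2 s3) -> False.
Proof.
  intros Hrr Hr H1 H12 H23 H3 HPI Hc C1 C2 C3 N12 N13 N23.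
  assert (T1 : Th s1 <= Th s2) by (eapply Th_le; eauto; lra).
  assert (T2 : Th s2 <= Th s3) by (eapply Th_le; eauto; lra).
  pose proof (inside_fwd a b g1 g2 e1 e2 v k Th Hg1 Hg2 He1 He2 HTh Hunit Hv Hk) as F.
  pose proof (inside_bwd a b g1 g2 e1 e2 v k Th Hg1 Hg2 He1 He2 HTh Hunit Hv Hk) as B.
  assert (F12 := F rr s1 s2 Hrr H1 H12 ltac:(lra) ltac:(lra) Hc).
  assert (F13 := F rr s1 s3 Hrr H1 ltac:(lra) H3 ltac:(lra) Hc).
  assert (F23 := F rr s2 s3 Hrr ltac:(lra) H23 H3 ltac:(lra) Hc).
  assert (B12 := B rr s1 s2 Hrr H1 H12 ltac:(lra) ltac:(lra) Hc).
  assert (B13 := B rr s1 s3 Hrr H1 ltac:(lra) H3 ltac:(lra) Hc).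
  assert (B23 := B rr s2 s3 Hrr ltac:(lra) H23 H3 ltac:(lra) Hc).
  assert (U1 := Hunit s1 ltac:(lra)). assert (U2 := Hunit s2 ltac:(lra)). assert (U3 := Hunit s3 ltac:(lra)).
  assert (U1' : (- e2 s1) * (- e2 s1) + e1 s1 * e1 s1 = 1) by lra.
  assert (U2' : (- e2 s2) * (- e2 s2) + e1 s2 * e1 s2 = 1) by lra.
  assert (U3' : (- e2 s3) * (- e2 s3) + e1 s3 * e1 s3 = 1) by lra.

  assert (N21 : ~ (g1 s2 = g1 s1 /\ g2 s2 = g2 s1)) by (intros [h h']; apply N12; split; congruence).
  assert (N31 : ~ (g1 s3 = g1 s1 /\ g2 s3 = g2 s1)) by (intros [h h']; apply N13; split; congruence).
  assert (N32 : ~ (g1 s3 = g1 s2 /\ g2 s3 = g2 s2)) by (intros [h h']; apply N23; split; congruence).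
  pose proof (conv_cap r rr _ _ _ _ _ _ Hrr Hr C1 C2 N21 U1' F12) as K21.
  pose proof (conv_cap r rr _ _ _ _ _ _ Hrr Hr C1 C3 N31 U1' F13) as K31.
  pose proof (conv_cap r rr _ _ _ _ _ _ Hrr Hr C2 C3 N32 U2' F23) as K32.
  pose proof (conv_cap r rr _ _ _ _ _ _ Hrr Hr C2 C1 N12 U2' B12) as K12.
  pose proof (conv_cap r rr _ _ _ _ _ _ Hrr Hr C3 C1 N13 U3' B13) as K13.
  pose proof (conv_cap r rr _ _ _ _ _ _ Hrr Hr C3 C2 N23 U3' B23) as K23.
  assert (Hr0 : 0 < r) by lra.
  apply (three_caps r (g1 s1) (g2 s1) (g1 s2) (g2 s2) (g1 s3) (g2 s3)
    (g1 s1 + r * - e2 s1) (g2 s1 + r * e1 s1) (g1 s2 + r * - e2 s2) (g2 s2 + r * e1 s2)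
    (g1 s3 + r * - e2 s3) (g2 s3 + r * e1 s3) Hr0 C1 C2 C3); try assumption.
  all: match goal with |- (?g + ?r * - ?e2 - ?g) * _ + (?h + ?r * ?e1 - ?h) * _ = _ =>
       transitivity (r*r*(e1*e1 + e2*e2)); [ring|] end.
  all: first [rewrite U1 | rewrite U2 | rewrite U3]; ring.
Qed.
End Frame2.


Lemma C_mult (f g : R -> R) x : continuous f x -> continuous g x -> continuous (fun t => f t * g t) x.
Proof. intros. apply (continuous_mult f g x); auto. Qed.
Lemma C_plus (f g : R -> R) x : continuous f x -> continuous g x -> continuous (fun t => f t + g t) x.
Proof. intros. apply (continuous_plus f g x); auto. Qed.
Lemma C_minus (f g : R -> R) x : continuous f x -> continuous g x -> continuous (fun t => f t - g t) x.
Proof. intros. apply (continuous_minus f g x); auto. Qed.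
Lemma C_ext (f g : R -> R) x : (forall t, f t = g t) -> continuous f x -> continuous g x.
Proof. intros. apply (continuous_ext f g x); auto. Qed.
Lemma D_ext (f g : R -> R) x l : (forall t, f t = g t) -> is_derive f x l -> is_derive g x l.
Proof. intros. apply (is_derive_ext f g x l); auto. Qed.
Lemma C_inv (f : R -> R) x : continuous f x -> f x <> 0 -> continuous (fun t => / f t) x.
Proof. intros. apply (continuous_Rinv_comp f x); auto. Qed.
Lemma C_comp (f g : R -> R) x : continuous f x -> continuous g (f x) -> continuous (fun t => g (f t)) x.
Proof. intros. apply (continuous_comp f g x); auto. Qed.
Lemma C_div (f g : R -> R) x : continuous f x -> continuous g x -> g x <> 0 -> continuous (fun t => f t / g t) x.
Proof. intros. apply (C_mult f (fun t => / g t)); auto. apply C_inv; auto. Qed.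
Lemma C_sq (f : R -> R) x : continuous f x -> continuous (fun t => f t ^ 2) x.
Proof. intros H. apply (C_ext (fun t => f t * f t)). intros; cbv beta; ring. apply C_mult; auto. Qed.
Lemma D_sq (f : R -> R) x a : is_derive f x a -> is_derive (fun t => f t ^ 2) x (2 * f x * a).
Proof. intros H. eapply D_eq. apply (D_ext (fun t => f t * f t)). intros; cbv beta; ring.
  apply D_mult; exact H. simpl. ring. Qed.

Lemma rpow32 u : 0 < u -> Rpower u (3/2) = u * sqrt u.
Proof. intros Hu. replace (3/2) with (1 + /2) by field. rewrite Rpower_plus, Rpower_1, Rpower_sqrt; auto. Qed.

Definition clampf (a b s : R) :=
  let m := (b + s - Rabs (b - s)) / 2 in (a + m + Rabs (a - m)) / 2.

Lemma clamp_in a b s : a <= b -> a <= clampf a b s <= b.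
Proof. intros H. unfold clampf. unfold Rabs; repeat destruct Rcase_abs; lra. Qed.
Lemma clamp_id a b s : a <= s <= b -> clampf a b s = s.
Proof. intros H. unfold clampf. unfold Rabs; repeat destruct Rcase_abs; lra. Qed.
Lemma clamp_cont a b s : continuous (clampf a b) s.
Proof.
  unfold clampf.
  apply (C_ext (fun s => (a + (b + s - Rabs (b - s)) / 2 + Rabs (a - (b + s - Rabs (b - s)) / 2)) / 2)).
  { intros; reflexivity. }
  apply (C_ext (fun s => (a + (b + s - Rabs (b - s)) * /2 + Rabs (a - (b + s - Rabs (b - s)) * /2)) * /2)).
  { intros; reflexivity. }
  assert (Hm : continuous (fun s => (b + s - Rabs (b - s)) * /2) s).
  { apply C_mult; [|apply continuous_const]. apply C_minus; [apply C_plus; [apply continuous_const|apply continuous_id]|].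
    apply (continuous_Rabs_comp (fun s => b - s)). apply C_minus; [apply continuous_const|apply continuous_id]. }
  apply C_mult; [|apply continuous_const]. apply C_plus.
  - apply C_plus; [apply continuous_const|exact Hm].
  - apply (continuous_Rabs_comp (fun s => a - (b + s - Rabs (b - s)) * /2)). apply C_minus; [apply continuous_const|exact Hm].
Qed.

Section Main.
Variables (x y : R -> R) (a b : R).
Hypothesis Cx : C2 x.
Hypothesis Cy : C2 y.
Hypothesis Hab : a < b.
Hypothesis Hnz : forall t, a <= t <= b -> Derive x t <> 0 \/ Derive y t <> 0.

Definition uf t := Derive x t ^ 2 + Derive y t ^ 2.
Definition kf t := curvature x y t * speed x y t.

Lemma uf_pos t : a <= t <= b -> 0 < uf t.
Proof.
  intros Ht. unfold uf. destruct (Hnz t Ht) as [h|h].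
  - pose proof (pow2_ge_0 (Derive y t)). assert (0 < Derive x t ^ 2) by (apply pow2_gt_0; exact h). lra.
  - pose proof (pow2_ge_0 (Derive x t)). assert (0 < Derive y t ^ 2) by (apply pow2_gt_0; exact h). lra.
Qed.

Lemma speed_pos t : a <= t <= b -> 0 < speed x y t.
Proof. intros Ht. unfold speed. apply sqrt_lt_R0. apply (uf_pos t Ht). Qed.

Lemma speed_sq t : speed x y t * speed x y t = uf t.
Proof. unfold speed, uf. apply sqrt_sqrt. pose proof (pow2_ge_0 (Derive x t)). pose proof (pow2_ge_0 (Derive y t)). lra. Qed.

Lemma cont_D1 (f : R -> R) t : C2 f -> continuous (Derive f) t.
Proof. intros H. apply (ex_derive_continuous (Derive f)). exact (proj1 (proj2 (H t))). Qed.
Lemma cont_D2 (f : R -> R) t : C2 f -> continuous (Derive (Derive f)) t.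
Proof. intros H. exact (proj2 (proj2 (H t))). Qed.

Lemma cont_uf t : continuous uf t.
Proof. unfold uf. apply C_plus; apply C_sq; apply cont_D1; auto. Qed.

Lemma cont_speed t : continuous (speed x y) t.
Proof. unfold speed. apply (continuous_sqrt_comp uf). apply cont_uf. Qed.

Lemma cont_curv t : a <= t <= b -> continuous (curvature x y) t.
Proof.
  intros Ht. unfold curvature, Rpower.
  apply C_div.
  - apply C_minus; apply C_mult.
    + apply cont_D1; exact Cx.
    + apply cont_D2; exact Cy.
    + apply cont_D1; exact Cy.
    + apply cont_D2; exact Cx.
  - apply (C_comp (fun t => 3/2 * ln (Derive x t ^ 2 + Derive y t ^ 2)) exp).
    + apply C_mult; [apply continuous_const|].
        apply (C_comp uf ln). apply cont_uf. apply continuous_ln. apply (uf_pos t Ht).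
    + apply continuous_exp.
  - apply Rgt_not_eq. apply exp_pos.
Qed.

Lemma cont_kf t : a <= t <= b -> continuous kf t.
Proof. intros Ht. unfold kf. apply C_mult; [apply cont_curv; auto|apply cont_speed]. Qed.

Lemma kf_formula t : a <= t <= b ->
  kf t = (Derive x t * Derive (Derive y) t - Derive y t * Derive (Derive x) t) / uf t.
Proof.
  intros Ht. unfold kf, curvature. fold (uf t). rewrite rpow32 by (apply uf_pos; auto).
  pose proof (speed_pos t Ht). pose proof (uf_pos t Ht).
  change (sqrt (uf t)) with (speed x y t). field. split; lra.
Qed.

End Main.


Section Main2.
Variables (x y : R -> R) (a b : R).
Hypothesis Cx : C2 x.
Hypothesis Cy : C2 y.
Hypothesis Hab : a < b.
Hypothesis Hnz : forall t, a <= t <= b -> Derive x t <> 0 \/ Derive y t <> 0.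
Hypothesis Hpos : forall t, a <= t <= b -> 0 < curvature x y t.

Definition e1f t := Derive x t / speed x y t.
Definition e2f t := Derive y t / speed x y t.
Definition kc s := kf x y (clampf a b s).
Definition Thf t := RInt kc a t.

Lemma dx1 t : is_derive x t (Derive x t).
Proof. apply Derive_correct. exact (proj1 (Cx t)). Qed.
Lemma dy1 t : is_derive y t (Derive y t).
Proof. apply Derive_correct. exact (proj1 (Cy t)). Qed.
Lemma dx2 t : is_derive (Derive x) t (Derive (Derive x) t).
Proof. apply Derive_correct. exact (proj1 (proj2 (Cx t))). Qed.
Lemma dy2 t : is_derive (Derive y) t (Derive (Derive y) t).
Proof. apply Derive_correct. exact (proj1 (proj2 (Cy t))). Qed.

Lemma dspeed t : a <= t <= b -> is_derive (speed x y) t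
  ((2 * Derive x t * Derive (Derive x) t + 2 * Derive y t * Derive (Derive y) t) / (2 * speed x y t)).
Proof.
  intros Ht. unfold speed.
  apply (is_derive_sqrt (fun t => Derive x t ^ 2 + Derive y t ^ 2)).
  - apply D_plus; apply D_sq; [apply dx2|apply dy2].
  - apply (uf_pos x y a b Hnz t Ht).
Qed.

Lemma de1 t : a <= t <= b -> is_derive e1f t (kf x y t * (- e2f t)).
Proof.
  intros Ht. unfold e1f, e2f.
  eapply D_eq. apply (is_derive_div (Derive x) (speed x y)). apply dx2. apply dspeed; auto.
  pose proof (speed_pos x y a b Hnz t Ht); lra.
  rewrite (kf_formula x y a b Hnz t Ht).
  pose proof (speed_pos x y a b Hnz t Ht) as Hs. pose proof (speed_sq x y t) as U.
  rewrite <- U. unfold uf in U.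
  set (sp := speed x y t) in *. set (X1 := Derive x t) in *. set (Y1 := Derive y t) in *.
  set (X2 := Derive (Derive x) t). set (Y2 := Derive (Derive y) t).
  assert (E : (X2 * sp - X1 * ((2 * X1 * X2 + 2 * Y1 * Y2) / (2 * sp))) / sp ^ 2
              - (X1 * Y2 - Y1 * X2) / (sp * sp) * - (Y1 / sp)
              = X2 * (sp * sp - (X1 ^ 2 + Y1 ^ 2)) / (sp ^ 3)) by (field; lra).
  rewrite <- U in E. replace (X2 * (sp * sp - sp * sp) / sp ^ 3) with 0 in E by (field; lra).
  lra.
Qed.

Lemma de2 t : a <= t <= b -> is_derive e2f t (kf x y t * e1f t).
Proof.
  intros Ht. unfold e1f, e2f.
  eapply D_eq. apply (is_derive_div (Derive y) (speed x y)). apply dy2. apply dspeed; auto.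
  pose proof (speed_pos x y a b Hnz t Ht); lra.
  rewrite (kf_formula x y a b Hnz t Ht).
  pose proof (speed_pos x y a b Hnz t Ht) as Hs. pose proof (speed_sq x y t) as U.
  rewrite <- U. unfold uf in U.
  set (sp := speed x y t) in *. set (X1 := Derive x t) in *. set (Y1 := Derive y t) in *.
  set (X2 := Derive (Derive x) t). set (Y2 := Derive (Derive y) t).
  assert (E : (Y2 * sp - Y1 * ((2 * X1 * X2 + 2 * Y1 * Y2) / (2 * sp))) / sp ^ 2
              - (X1 * Y2 - Y1 * X2) / (sp * sp) * (X1 / sp)
              = Y2 * (sp * sp - (X1 ^ 2 + Y1 ^ 2)) / (sp ^ 3)) by (field; lra).
  rewrite <- U in E. replace (Y2 * (sp * sp - sp * sp) / sp ^ 3) with 0 in E by (field; lra).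
  lra.
Qed.

Lemma unit_e t : a <= t <= b -> e1f t * e1f t + e2f t * e2f t = 1.
Proof.
  intros Ht. unfold e1f, e2f.
  pose proof (speed_pos x y a b Hnz t Ht) as Hs. pose proof (speed_sq x y t) as U. unfold uf in U.
  set (sp := speed x y t) in *.
  field_simplify; [|lra]. rewrite <- U. field. lra.
Qed.

Lemma kc_cont s : continuous kc s.
Proof.
  unfold kc. apply (C_comp (clampf a b) (kf x y)). apply clamp_cont.
  apply (cont_kf x y a b Cx Cy Hnz). apply clamp_in. lra.
Qed.

Lemma dTh t : a <= t <= b -> is_derive Thf t (kf x y t).
Proof.
  intros Ht. eapply D_eq.
  - apply (is_derive_RInt kc Thf a t).
    + apply filter_forall. intros z. unfold Thf. apply (RInt_correct kc a z). apply (ex_RInt_continuous kc).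
      intros w _. apply kc_cont.
    + apply kc_cont.
  - unfold kc. rewrite clamp_id; auto.
Qed.

Lemma Th_total : Thf b - Thf a = total_curvature x y a b.
Proof.
  unfold Thf, total_curvature. rewrite RInt_point. simpl.
  rewrite Rminus_0_r. apply RInt_ext. intros z Hz.
  rewrite Rmin_left in Hz by lra. rewrite Rmax_right in Hz by lra.
  unfold kc, kf. rewrite clamp_id; [reflexivity|lra].
Qed.

End Main2.


Lemma sort3 (Q : R -> R -> R -> Prop) :
  (forall p q w, Q p q w -> Q q p w) -> (forall p q w, Q p q w -> Q p w q) ->
  (forall p q w, p < q -> q < w -> Q p q w -> False) ->
  forall p q w, p <> q -> p <> w -> q <> w -> Q p q w -> False.
Proof.
  intros S12 S23 C p q w Hpq Hpw Hqw HQ.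
  assert (T : forall u z, u <> z -> u < z \/ z < u) by (intros u z h; destruct (Rtotal_order u z) as [?|[?|?]]; auto; contradiction).
  destruct (T _ _ Hpq) as [h1|h1]; destruct (T _ _ Hqw) as [h2|h2]; destruct (T _ _ Hpw) as [h3|h3];
  first
    [ exact (C p q w h1 h2 HQ)
    | exact (C p w q h3 h2 (S23 _ _ _ HQ))
    | exact (C w p q h3 h1 (S12 _ _ _ (S23 _ _ _ HQ)))
    | exact (C q p w h1 h3 (S12 _ _ _ HQ))
    | exact (C q w p h2 h3 (S23 _ _ _ (S12 _ _ _ HQ)))
    | exact (C w q p h2 h1 (S12 _ _ _ (S23 _ _ _ (S12 _ _ _ HQ))))
    | lra ].
Qed.

Theorem theorem4p8 (x y : R -> R) (a b : R) (cx cy r : R) :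
  a < b ->
  C2 x -> C2 y ->
  (forall t, a <= t <= b -> Derive x t <> 0 \/ Derive y t <> 0) ->
  (forall t, a <= t <= b ->
     Derive (Derive x) t <> 0 \/ Derive (Derive y) t <> 0) ->
  (forall t, a <= t <= b -> 0 < curvature x y t) ->
  total_curvature x y a b <= PI ->
  0 < r ->
  (exists t1 t2 t3,
      a <= t1 <= b /\ a <= t2 <= b /\ a <= t3 <= b /\
      ~ same_point x y t1 t2 /\ ~ same_point x y t1 t3 /\ ~ same_point x y t2 t3 /\
      on_circle x y cx cy r t1 /\ on_circle x y cx cy r t2 /\ on_circle x y cx cy r t3) ->
  exists t, a <= t <= b /\ curvature x y t = 1 / r.
Proof.
  intros Hab Cx Cy Hnz _ Hpos Htot Hr Hex.
  destruct (classic (exists t, a <= t <= b /\ curvature x y t = 1 / r)) as [H|Hno]; [exact H|exfalso].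
  assert (Hne : forall t, a <= t <= b -> curvature x y t <> 1 / r).
  { intros t Ht E. apply Hno. exists t. split; auto. }
  assert (Hcp : forall t, a <= t <= b -> continuity_pt (curvature x y) t).
  { intros t Ht. apply continuity_pt_filterlim. apply (cont_curv x y a b Cx Cy Hnz t Ht). }
  assert (Hsign : (forall t, a <= t <= b -> curvature x y t < 1 / r) \/
                  (forall t, a <= t <= b -> 1 / r < curvature x y t)).
  { assert (Ha : a <= a <= b) by lra.
    destruct (Rlt_or_le (curvature x y a) (1 / r)) as [h|h].
    - left. intros t Ht. destruct (Rlt_or_le (curvature x y t) (1 / r)) as [h'|h']; [exact h'|exfalso].
      assert (h'' : 1 / r < curvature x y t) by (destruct h' as [h'|h']; [exact h'|exfalso; apply (Hne t Ht); auto]).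
      assert (Hat : a < t) by (destruct (Rle_lt_or_eq_dec a t (proj1 Ht)) as [e|e]; [exact e|subst; lra]).
      destruct (Ranalysis5.IVT_interv (fun s => curvature x y s - 1 / r) a t) as [z [Hz Hz']].
      + intros s Hs. apply continuity_pt_minus; [apply Hcp; lra|apply continuity_pt_const; intros ? ?; reflexivity].
      + exact Hat.
      + lra.
      + lra.
      + apply (Hne z); lra.
    - right. assert (h0 : 1 / r < curvature x y a) by (destruct h as [h|h]; [exact h|exfalso; apply (Hne a Ha); auto]).
      intros t Ht. destruct (Rlt_or_le (1 / r) (curvature x y t)) as [h'|h']; [exact h'|exfalso].
      assert (h'' : curvature x y t < 1 / r) by (destruct h' as [h'|h']; [exact h'|exfalso; apply (Hne t Ht); auto]).
      assert (Hat : a < t) by (destruct (Rle_lt_or_eq_dec a t (proj1 Ht)) as [e|e]; [exact e|subst; lra]).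
      destruct (Ranalysis5.IVT_interv (fun s => 1 / r - curvature x y s) a t) as [z [Hz Hz']].
      + intros s Hs. apply continuity_pt_minus; [apply continuity_pt_const; intros ? ?; reflexivity|apply Hcp; lra].
      + exact Hat.
      + lra.
      + lra.
      + apply (Hne z); lra. }
  set (g1 := fun t => x t - cx). set (g2 := fun t => y t - cy).
  set (e1 := e1f x y). set (e2 := e2f x y). set (v := speed x y). set (k := kf x y).
  set (Th := Thf x y a b).
  assert (Hg1 : forall t, a <= t <= b -> is_derive g1 t (v t * e1 t)).
  { intros t Ht. eapply D_eq. apply D_minus. apply (dx1 x Cx). apply D_const.
    unfold v, e1, e1f. pose proof (speed_pos x y a b Hnz t Ht). simpl. field. lra. }
  assert (Hg2 : forall t, a <= t <= b -> is_derive g2 t (v t * e2 t)).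
  { intros t Ht. eapply D_eq. apply D_minus. apply (dy1 y Cy). apply D_const.
    unfold v, e2, e2f. pose proof (speed_pos x y a b Hnz t Ht). simpl. field. lra. }
  assert (He1 : forall t, a <= t <= b -> is_derive e1 t (k t * (- e2 t))) by (intros t Ht; eapply de1; eauto).
  assert (He2 : forall t, a <= t <= b -> is_derive e2 t (k t * e1 t)) by (intros t Ht; eapply de2; eauto).
  assert (HTh : forall t, a <= t <= b -> is_derive Th t (k t)) by (intros t Ht; eapply dTh; eauto).
  assert (Hunit : forall t, a <= t <= b -> e1 t * e1 t + e2 t * e2 t = 1) by (intros t Ht; eapply unit_e; eauto).
  assert (Hv : forall t, a <= t <= b -> 0 < v t) by (intros; apply (speed_pos x y a b Hnz); auto).
  assert (Hk : forall t, a <= t <= b -> 0 < k t).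
  { intros t Ht. unfold k, kf. apply Rmult_lt_0_compat; [apply Hpos; auto|apply Hv; auto]. }
  assert (HThab : Th b - Th a <= PI) by (unfold Th; rewrite (Th_total x y a b Hab); exact Htot).
  assert (HThr : forall s1 s3, a <= s1 -> s1 <= s3 -> s3 <= b -> Th s3 - Th s1 <= PI).
  { intros s1 s3 h1 h2 h3.
    assert (Th a <= Th s1) by (eapply Th_le; eauto; lra).
    assert (Th s3 <= Th b) by (eapply Th_le; eauto; lra). lra. }
  set (Q := fun s1 s2 s3 =>
      a <= s1 <= b /\ a <= s2 <= b /\ a <= s3 <= b /\
      ~ same_point x y s1 s2 /\ ~ same_point x y s1 s3 /\ ~ same_point x y s2 s3 /\
      on_circle x y cx cy r s1 /\ on_circle x y cx cy r s2 /\ on_circle x y cx cy r s3).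
  assert (Ssym : forall p q, ~ same_point x y p q -> ~ same_point x y q p).
  { intros p q h [h1 h2]. apply h. split; auto. }
  assert (Cc : forall s, on_circle x y cx cy r s -> g1 s * g1 s + g2 s * g2 s = r * r).
  { intros s h. unfold on_circle in h. unfold g1, g2. nra. }
  assert (Nn : forall p q, ~ same_point x y p q -> ~ (g1 p = g1 q /\ g2 p = g2 q)).
  { intros p q h [h1 h2]. apply h. unfold g1, g2 in *. split; lra. }
  destruct Hex as [t1 [t2 [t3 HQ]]].
  apply (sort3 Q) with t1 t2 t3.
  - intros u1 u2 u3 HH. unfold Q in HH |- *. destruct HH as [h1 [h2 [h3 [h4 [h5 [h6 [h7 [h8 h9]]]]]]]]. exact (conj h2 (conj h1 (conj h3 (conj (Ssym _ _ h4) (conj h6 (conj h5 (conj h8 (conj h7 h9)))))))).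
  - intros u1 u2 u3 HH. unfold Q in HH |- *. destruct HH as [h1 [h2 [h3 [h4 [h5 [h6 [h7 [h8 h9]]]]]]]]. exact (conj h1 (conj h3 (conj h2 (conj h5 (conj h4 (conj (Ssym _ _ h6) (conj h7 (conj h9 h8)))))))).
  - intros s1 s2 s3 h12 h23 HH. unfold Q in HH. destruct HH as [h1 [h2 [h3 [h4 [h5 [h6 [h7 [h8 h9]]]]]]]].
    assert (HP : Th s3 - Th s1 <= PI) by (apply HThr; lra).
    destruct Hsign as [Hs|Hs].
    + apply (flat_core a b g1 g2 e1 e2 v k Th Hg1 Hg2 He1 He2 HTh Hunit Hk r s1 s2 s3 Hr
               ltac:(lra) h12 h23 ltac:(lra) HP); try (apply Cc; assumption).
      intros t Ht. unfold k, kf. pose proof (Hs t Ht). pose proof (Hv t Ht). pose proof (Hpos t Ht).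
      fold v. assert (r * curvature x y t < 1).
      { apply (Rmult_lt_reg_r (/ r)). apply Rinv_0_lt_compat; lra.
        replace (r * curvature x y t * / r) with (curvature x y t) by (field; lra). lra. }
      assert (r * curvature x y t * v t < 1 * v t) by (apply Rmult_lt_compat_r; lra).
      lra.
    + destruct (continuity_ab_min (curvature x y) a b (Rlt_le _ _ Hab) Hcp) as [m [Hm Hmab]].
      pose proof (Hs m Hmab) as Hkm.
      assert (Hkm0 : 0 < curvature x y m) by (apply Hpos; auto).
      assert (Hr' : 1 / r < curvature x y m) by exact Hkm.
      apply (curvy_core a b g1 g2 e1 e2 v k Th Hg1 Hg2 He1 He2 HTh Hunit Hv Hk r (/ curvature x y m) s1 s2 s3).
      * apply Rinv_0_lt_compat; lra.
      * apply (Rmult_lt_reg_r (curvature x y m)); [lra|].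
        rewrite Rinv_l by lra.
        apply (Rmult_lt_reg_l (/ r)); [apply Rinv_0_lt_compat; lra|].
        replace (/ r * (r * curvature x y m)) with (curvature x y m) by (field; lra).
        replace (/ r * 1) with (1 / r) by (field; lra). exact Hr'.
      * lra.
      * exact h12.
      * exact h23.
      * lra.
      * exact HP.
      * intros t Ht. unfold k, kf. fold v. pose proof (Hm t Ht). pose proof (Hv t Ht).
        replace (/ curvature x y m * (curvature x y t * v t)) with ((curvature x y t / curvature x y m) * v t)
          by (field; lra).
        assert (1 <= curvature x y t / curvature x y m).
        { apply (Rmult_le_reg_r (curvature x y m)); [lra|].
          replace (curvature x y t / curvature x y m * curvature x y m) with (curvature x y t) by (field; lra). lra. }
        assert (1 * v t <= (curvature x y t / curvature x y m) * v t) by (apply Rmult_le_compat_r; lra).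
        lra.
      * apply Cc; assumption.
      * apply Cc; assumption.
      * apply Cc; assumption.
      * apply Nn; assumption.
      * apply Nn; assumption.
      * apply Nn; assumption.
  - intros E. destruct HQ as [_ [_ [_ [h _]]]]. apply h. subst. split; reflexivity.
  - intros E. destruct HQ as [_ [_ [_ [_ [h _]]]]]. apply h. subst. split; reflexivity.
  - intros E. destruct HQ as [_ [_ [_ [_ [_ [h _]]]]]]. apply h. subst. split; reflexivity.
  - exact HQ.
Qed.
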